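(* Let $V$ be an infinite-dimensional vector space over a field $\mathbb{F}$, let $\lambda\in\mathbb{F}$, and let $p_1,p_2,p_3\in\mathbb{F}[t]$ be split polynomials of degree $2$. Then $\lambda\,\mathrm{id}_V$ is a $(p_1,p_2,p_3)$-sum if and only if $\lambda$ is a $(p_1,p_2,p_3)$-sum or $2\lambda=\operatorname{tr}p_1+\operatorname{tr}p_2+\operatorname{tr}p_3$.
   Context: An endomorphism $u$ is a $(p_1,p_2,p_3)$-sum if $u=u_1+u_2+u_3$ for some endomorphisms $u_k$ of $V$ with $p_k(u_k)=0$ for all $k$. A scalar $\lambda$ is a $(p_1,p_2,p_3)$-sum if $\lambda=x_1+x_2+x_3$ with $x_k\in\mathbb{F}$ and $p_k(x_k)=0$ for all $k$. The trace $\operatorname{tr}p$ of a nonconstant polynomial $p$ with leading coefficient $\alpha$ is the opposite of the coefficient of $\alpha^{-1}p$ on $t^{\deg p-1}$. *)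

(* Defs.v *)
From HB Require Import structures.
From mathcomp Require Import all_boot all_order all_algebra.
Set Implicit Arguments. Unset Strict Implicit. Unset Printing Implicit Defensive.
Import Order.TTheory GRing.Theory Num.Theory.
Local Open Scope ring_scope.

Definition finite_dim (F : fieldType) (V : lmodType F) : Prop :=
  exists s : seq V, forall v : V,
    exists c : 'I_(size s) -> F, v = \sum_(i < size s) c i *: s`_i.

Definition infinite_dim (F : fieldType) (V : lmodType F) : Prop :=
  ~ finite_dim V.

Definition poly_endo (F : fieldType) (V : lmodType F) (p : {poly F})
  (u : V -> V) : V -> V :=
  fun v => \sum_(i < size p) p`_i *: iter i u v.

Definition annihilates (F : fieldType) (V : lmodType F) (p : {poly F})
  (u : V -> V) : Prop := forall v, poly_endo p u v = 0.

Definition endo_sum3 (F : fieldType) (V : lmodType F) (p1 p2 p3 : {poly F})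
  (u : V -> V) : Prop :=
  exists u1 u2 u3 : V -> V,
    [/\ linear u1, linear u2 & linear u3] /\
    [/\ annihilates p1 u1, annihilates p2 u2 & annihilates p3 u3] /\
    (forall v, u v = u1 v + u2 v + u3 v).

Definition scalar_sum3 (F : fieldType) (p1 p2 p3 : {poly F}) (l : F) : Prop :=
  exists x1 x2 x3 : F,
    [/\ root p1 x1, root p2 x2, root p3 x3 & l = x1 + x2 + x3].

Definition split_poly (F : fieldType) (p : {poly F}) : Prop :=
  exists r : seq F, p = lead_coef p *: \prod_(x <- r) ('X - x%:P).

(* trace of nonconstant p: minus the coefficient of t^(deg p - 1) in the monic p *)
Definition poly_tr (F : fieldType) (p : {poly F}) : F :=
  - ((lead_coef p)^-1 *: p)`_(size p - 2).

(* Main.v *)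
Require Import Defs.
From HB Require Import structures.
From mathcomp Require Import all_boot all_order all_algebra.
Import Order.TTheory GRing.Theory Num.Theory.
Local Open Scope ring_scope.
From mathcomp Require Import ring.
From mathcomp Require Import boolp classical_sets.

Set Implicit Arguments. Unset Strict Implicit. Unset Printing Implicit Defensive.

Section Poly.
Variable F : fieldType.

Definition q2 (c a b : F) : {poly F} := c *: (('X - a%:P) * ('X - b%:P)).

Lemma q2E c a b : q2 c a b = (c * (a * b))%:P + (- (c * (a + b)))%:P * 'X + c%:P * 'X^2.
Proof.
rewrite /q2 -mul_polyC; rewrite !polyCN !polyCM !polyCD expr2; ring.
Qed.

Lemma q2_coef c a b :
  [/\ (q2 c a b)`_0 = c * (a * b), (q2 c a b)`_1 = - (c * (a + b)) & (q2 c a b)`_2 = c].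
Proof.
by rewrite q2E; split; rewrite !coefD !coefCM !coefC !coefX !coefXn /=; ring.
Qed.

Lemma split3 (p : {poly F}) : split_poly p -> size p = 3%N ->
  exists c a b, c != 0 /\ p = q2 c a b.
Proof.
move=> [r Hr] sp.
have p0 : p != 0 by rewrite -size_poly_eq0 sp.
have c0 : lead_coef p != 0 by rewrite lead_coef_eq0.
have : size p = (size r).+1.
  by rewrite Hr size_scale // size_prod_XsubC.
rewrite sp; case: r Hr => [|a [|b [|? ?]]] //= Hr _.
exists (lead_coef p), a, b; split => //.
by rewrite {1}Hr /q2 !big_cons big_nil mulr1.
Qed.

Lemma q2_size c a b : c != 0 -> size (q2 c a b) = 3%N.
Proof.
move=> c0; rewrite /q2 size_scale // size_mul ?polyXsubC_eq0 // !size_XsubC.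
by [].
Qed.

Lemma q2_lead c a b : c != 0 -> lead_coef (q2 c a b) = c.
Proof. by move=> c0; rewrite /lead_coef q2_size //; case: (@q2_coef c a b). Qed.

Lemma q2_tr c a b : c != 0 -> poly_tr (q2 c a b) = a + b.
Proof.
move=> c0; rewrite /poly_tr q2_lead // q2_size // coefZ.
case: (@q2_coef c a b) => _ -> _ /=; by field.
Qed.

Lemma q2_root c a b x : c != 0 -> root (q2 c a b) x = (x == a) || (x == b).
Proof.
move=> c0; rewrite rootE /q2 hornerZ hornerM !hornerXsubC mulf_eq0 (negPf c0) /=.
by rewrite mulf_eq0 !subr_eq0.
Qed.

Variable V : lmodType F.

Lemma poly_endo_q2 c a b (u : V -> V) v :
  poly_endo (q2 c a b) u v = c *: (u (u v) - (a + b) *: u v + (a * b) *: v).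
Proof.
have c0 : c != 0 \/ c = 0 by case: (eqVneq c 0); [right|left].
case: c0 => [c0|->].
  rewrite /poly_endo q2_size // !big_ord_recr big_ord0 /=.
  case: (@q2_coef c a b) => -> -> ->.
  rewrite add0r !scalerDr !scalerN !scalerA scaleNr.
  by rewrite [RHS]addrC [X in _ = _ + X]addrC addrA.
by rewrite /q2 /poly_endo -mul_polyC mul0r size_poly0 big_ord0 scale0r.
Qed.

End Poly.


Section Lin.
Variables (F : fieldType) (V : lmodType F) (f : V -> V).
Hypothesis Hf : linear f.
Lemma lin0 : f 0 = 0.
Proof. by have := Hf (-1) 0 0; rewrite scaler0 addr0 scaleN1r addNr. Qed.
Lemma linD x y : f (x + y) = f x + f y.
Proof. by have := Hf 1 x y; rewrite !scale1r. Qed.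
Lemma linZ k x : f (k *: x) = k *: f x.
Proof. by have := Hf k x 0; rewrite !addr0 lin0 addr0. Qed.
Lemma linN x : f (- x) = - f x.
Proof. by rewrite -scaleN1r linZ scaleN1r. Qed.
Lemma linB x y : f (x - y) = f x - f y.
Proof. by rewrite linD linN. Qed.
End Lin.

Lemma quad_root (F : fieldType) (a b x : F) :
  x * x - (a + b) * x + a * b = 0 -> (x == a) || (x == b).
Proof.
move=> h; have : (x - a) * (x - b) = 0 by rewrite -h; ring.
by move/eqP; rewrite mulf_eq0 !subr_eq0.
Qed.

Section Eig.
Variables (F : fieldType) (V : lmodType F) (f : V -> V) (a b : F).
Hypothesis Hf : linear f.
Hypothesis Hq : forall v, f (f v) - (a + b) *: f v + (a * b) *: v = 0.
Lemma eig_root w x : w != 0 -> f w = x *: w -> (x == a) || (x == b).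
Proof.
move=> w0 fw; apply: quad_root.
have := Hq w; rewrite fw linZ // fw !scalerA -scalerBl -scalerDl.
by move/eqP; rewrite scaler_eq0 (negPf w0) orbF => /eqP.
Qed.
End Eig.

Section Nec.
Variables (F : fieldType) (V : lmodType F) (al be ga : V -> V).
Variables (l a1 b1 a2 b2 a3 b3 : F).
Hypotheses (Lal : linear al) (Lbe : linear be) (Lga : linear ga).
Hypothesis Hal : forall v, al (al v) - (a1 + b1) *: al v + (a1 * b1) *: v = 0.
Hypothesis Hbe : forall v, be (be v) - (a2 + b2) *: be v + (a2 * b2) *: v = 0.
Hypothesis Hga : forall v, ga (ga v) - (a3 + b3) *: ga v + (a3 * b3) *: v = 0.
Hypothesis Hsum : forall v, l *: v = al v + be v + ga v.

Definition SS := exists x1 x2 x3, [/\ (x1 == a1) || (x1 == b1),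
   (x2 == a2) || (x2 == b2), (x3 == a3) || (x3 == b3) & l = x1 + x2 + x3].

Lemma ga_eq v : ga v = l *: v - (al v + be v).
Proof. by rewrite Hsum [_ + ga v]addrC addrK. Qed.

Lemma common w x y : w != 0 -> al w = x *: w -> be w = y *: w -> SS.
Proof.
move=> w0 aw bw.
exists x, y, (l - x - y); split.
- exact: (eig_root Lal Hal w0 aw).
- exact: (eig_root Lbe Hbe w0 bw).
- apply: (eig_root Lga Hga w0).
  by rewrite ga_eq aw bw -scalerDl -scalerBl; congr (_ *: _); ring.
- ring.
Qed.

Section Main.
Variables (w bw z : V) (a a' : F).
Hypotheses (w0 : w != 0) (Haw : al w = a *: w) (Hbw : be w = bw) (Hz : al bw = z).
Hypotheses (Haa : a + a' = a1 + b1) (Haa' : a * a' = a1 * b1).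
Hypothesis Hn : ~ exists y, be w = y *: w.

Definition ev3 r s t := r *: w + s *: bw + t *: z.

Lemma ev3D r s t r' s' t' : ev3 r s t + ev3 r' s' t' = ev3 (r + r') (s + s') (t + t').
Proof. by rewrite /ev3 !scalerDl addrACA [X in X + _]addrACA. Qed.
Lemma ev3Z k r s t : k *: ev3 r s t = ev3 (k * r) (k * s) (k * t).
Proof. by rewrite /ev3 !scalerDr !scalerA. Qed.
Lemma ev3N r s t : - ev3 r s t = ev3 (- r) (- s) (- t).
Proof. by rewrite -scaleN1r ev3Z !mulN1r. Qed.
Lemma e1 : w = ev3 1 0 0. Proof. by rewrite /ev3 !scale0r !addr0 scale1r. Qed.
Lemma e2 : bw = ev3 0 1 0. Proof. by rewrite /ev3 !scale0r addr0 add0r scale1r. Qed.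
Lemma e3 : z = ev3 0 0 1. Proof. by rewrite /ev3 !scale0r !add0r scale1r. Qed.
Lemma lin3 (f : V -> V) r s t : linear f -> f (ev3 r s t) = r *: f w + s *: f bw + t *: f z.
Proof. by move=> Lf; rewrite /ev3 !(linD Lf) !(linZ Lf). Qed.

Ltac norm3 := rewrite ?[w]e1 ?[bw]e2 ?[z]e3;
  repeat (first [rewrite ev3Z | rewrite ev3N | rewrite ev3D]).

Lemma indep3 r s : ev3 r s 0 = 0 -> r = 0 /\ s = 0.
Proof.
rewrite /ev3 scale0r addr0 => h.
have [s0|s0] := eqVneq s 0.
  move: h; rewrite s0 scale0r addr0 => /eqP; rewrite scaler_eq0 (negPf w0) orbF.
  by move/eqP.
exfalso; apply: Hn; exists (- (r / s)); rewrite Hbw.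
apply: (scalerI s0); rewrite scalerA (_ : s * - (r / s) = - r); last by field.
by apply/eqP; rewrite scaleNr -addr_eq0 addrC h.
Qed.

Lemma solve_z3 X Y : ev3 X Y 1 = 0 -> z = ev3 (- X) (- Y) 0.
Proof.
rewrite /ev3 scale1r addrC => /eqP; rewrite addr_eq0 => /eqP ->.
by rewrite scale0r addr0 !scaleNr opprD.
Qed.

Lemma solve1 (x y t : V) : x - y + t = 0 -> x = y - t.
Proof. by move/eqP; rewrite -addrA addr_eq0 opprD opprK => /eqP. Qed.

Lemma nec_main : SS \/ 2%:R * l = (a1 + b1) + (a2 + b2) + (a3 + b3).
Proof.
have bbw : be bw = (a2 + b2) *: bw - (a2 * b2) *: w.
  by apply: solve1; rewrite -Hbw; apply: Hbe.
have gw : ga w = ev3 (l - a) (-1) 0.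
  by rewrite ga_eq Haw Hbw; norm3; congr ev3; ring.
have gbw : ga bw = ev3 (a2 * b2) (l - (a2 + b2)) (-1).
  by rewrite ga_eq Hz bbw; norm3; congr ev3; ring.
pose X := (l - a) * (l - a) - a2 * b2 - (a3 + b3) * (l - a) + a3 * b3.
pose Y := - (l - a) - l + (a2 + b2) + (a3 + b3).
have E4 : ev3 X Y 1 = 0.
  rewrite -(Hga w) gw (lin3 _ _ _ Lga) gw gbw scale0r addr0; norm3.
  by rewrite /X /Y; congr ev3; ring.
have zE := solve_z3 E4.
pose C := - X; pose e := - Y.
have E5 : ev3 (C * a + e * C - (a1 + b1) * C) (e * e - (a1 + b1) * e + a1 * b1) 0 = 0.
  rewrite -(Hal bw) Hz zE (lin3 _ _ _ Lal) Haw Hz zE scale0r addr0; norm3.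
  by rewrite /C /e; congr ev3; ring.
have [P0 Q0] := indep3 E5.
have [ea'|ea'] := eqVneq e a'.
  right; rewrite -Haa -ea' /e /Y; ring.
left.
have ea : e = a.
  move: Q0; rewrite -Haa -Haa' => /quad_root /orP [] /eqP //.
  by move=> h; rewrite h eqxx in ea'.
have C0 : C = 0.
  move: P0; rewrite -Haa ea => /eqP.
  rewrite (_ : C * a + a * C - (a + a') * C = C * (a - a')); last by ring.
  rewrite mulf_eq0 subr_eq0 -ea (negPf ea') orbF => /eqP //.
have zE' : z = a *: bw.
  by rewrite zE -/C -/e C0 ea /ev3 !scale0r add0r addr0.
have [w20|w20] := eqVneq (bw - a2 *: w) 0.
  by exfalso; apply: Hn; exists a2; rewrite Hbw; apply/eqP; rewrite -subr_eq0 w20.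
apply: (common w20 (x := a) (y := b2)).
  by rewrite (linB Lal) (linZ Lal) Haw Hz zE' scalerBr !scalerA mulrC.
rewrite (linB Lbe) (linZ Lbe) Hbw bbw; norm3; congr ev3; ring.
Qed.
End Main.
End Nec.

Section Ev4.
Variables (F : fieldType) (V : lmodType F) (x1 x2 x3 x4 : V).
Definition ev4 r1 r2 r3 r4 := r1 *: x1 + r2 *: x2 + r3 *: x3 + r4 *: x4.
Lemma ev4D r1 r2 r3 r4 s1 s2 s3 s4 :
  ev4 r1 r2 r3 r4 + ev4 s1 s2 s3 s4 = ev4 (r1 + s1) (r2 + s2) (r3 + s3) (r4 + s4).
Proof. by rewrite /ev4 !scalerDl addrACA [X in X + _]addrACA [X in X + _ + _]addrACA. Qed.
Lemma ev4Z k r1 r2 r3 r4 : k *: ev4 r1 r2 r3 r4 = ev4 (k * r1) (k * r2) (k * r3) (k * r4).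
Proof. by rewrite /ev4 !scalerDr !scalerA. Qed.
Lemma ev4N r1 r2 r3 r4 : - ev4 r1 r2 r3 r4 = ev4 (- r1) (- r2) (- r3) (- r4).
Proof. by rewrite -scaleN1r ev4Z !mulN1r. Qed.
Lemma f1 : x1 = ev4 1 0 0 0. Proof. by rewrite /ev4 !scale0r !addr0 scale1r. Qed.
Lemma f2 : x2 = ev4 0 1 0 0. Proof. by rewrite /ev4 !scale0r !addr0 add0r scale1r. Qed.
Lemma f3 : x3 = ev4 0 0 1 0. Proof. by rewrite /ev4 !scale0r addr0 !add0r scale1r. Qed.
Lemma f4 : x4 = ev4 0 0 0 1. Proof. by rewrite /ev4 !scale0r !add0r scale1r. Qed.
Lemma ev40 : ev4 0 0 0 0 = 0. Proof. by rewrite /ev4 !scale0r !addr0. Qed.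

Ltac norm4 := rewrite ?[x1]f1 ?[x2]f2 ?[x3]f3 ?[x4]f4;
  repeat (first [rewrite ev4Z | rewrite ev4N | rewrite ev4D]).

Lemma quad_id m11 m12 m21 m22 :
  (m11 *: (m11 *: x1 + m12 *: x2) + m12 *: (m21 *: x1 + m22 *: x2)
   + m21 *: (m11 *: x3 + m12 *: x4) + m22 *: (m21 *: x3 + m22 *: x4))
  - (m11 + m22) *: (m11 *: x1 + m12 *: x2 + m21 *: x3 + m22 *: x4)
  + (m11 * m22 - m12 * m21) *: (x1 + x4) = 0.
Proof. rewrite -ev40; norm4; congr ev4; ring. Qed.

Lemma sum_id l m11 m12 m21 m22 n11 n12 n21 n22 k11 k12 k21 k22 :
  m11 + n11 + k11 = l -> m12 + n12 + k12 = 0 -> m21 + n21 + k21 = 0 ->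
  m22 + n22 + k22 = l ->
  l *: (x1 + x4) =
  (m11 *: x1 + m12 *: x2 + m21 *: x3 + m22 *: x4)
  + (n11 *: x1 + n12 *: x2 + n21 *: x3 + n22 *: x4)
  + (k11 *: x1 + k12 *: x2 + k21 *: x3 + k22 *: x4).
Proof.
move=> h1 h2 h3 h4.
have -> : k11 = l - m11 - n11 by rewrite -h1; ring.
have -> : k12 = - m12 - n12 by rewrite -[RHS]addr0 -h2; ring.
have -> : k21 = - m21 - n21 by rewrite -[RHS]addr0 -h3; ring.
have -> : k22 = l - m22 - n22 by rewrite -h4; ring.
norm4; congr ev4; ring.
Qed.
End Ev4.

Section LinComb.
Variables (F : fieldType) (V : lmodType F).
Lemma linear_add (f g : V -> V) : linear f -> linear g -> linear (fun v => f v + g v).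
Proof.
move=> Lf Lg k u v; rewrite Lf Lg scalerDr.
by rewrite addrACA.
Qed.
Lemma linear_scale (f : V -> V) a : linear f -> linear (fun v => a *: f v).
Proof. by move=> Lf k u v; rewrite Lf scalerDr !scalerA mulrC. Qed.
End LinComb.

Section Full.
Variables (F : fieldType) (V : lmodType F) (H : V -> V -> Prop).
Hypothesis HD : forall x y x' y', H x y -> H x' y' -> H (x + x') (y + y').
Hypothesis HZ : forall k x y, H x y -> H (k *: x) (k *: y).
Hypothesis H1 : forall y, H 0 y -> y = 0.
Hypothesis H2 : forall x, H x 0 -> x = 0.
Hypothesis Hdir : forall x y x' y', H x y -> H x' y' -> x + y' = 0 -> x = 0.
Hypothesis Hfull : forall v, exists t : (V * V) * (V * V),
  [/\ H t.1.1 t.1.2, H t.2.1 t.2.2 & v = t.1.1 + t.2.2].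

Definition dec v := proj1_sig (cid (Hfull v)).
Lemma decP v : [/\ H (dec v).1.1 (dec v).1.2, H (dec v).2.1 (dec v).2.2
   & v = (dec v).1.1 + (dec v).2.2].
Proof. exact: (proj2_sig (cid (Hfull v))). Qed.

Lemma HBsub x y x' y' : H x y -> H x' y' -> H (x - x') (y - y').
Proof. by move=> h h'; apply: HD => //; rewrite -!scaleN1r; apply: HZ. Qed.

Lemma decE v x y x' y' : H x y -> H x' y' -> v = x + y' ->
  dec v = ((x, y), (x', y')).
Proof.
case: (decP v); case: (dec v) => [[p1 p2] [q1 q2]] /= hp hq ev h h' ev'.
have e1 : x - p1 = 0.
  apply: (Hdir (y := y - p2) (x' := x' - q1) (y' := y' - q2)); try exact: HBsub.
  by apply/eqP; rewrite addrACA -opprD subr_eq0 -ev' ev.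
have e2 : y - p2 = 0 by apply: H1; rewrite -e1; exact: HBsub.
have e1' : x = p1 by apply/eqP; rewrite -subr_eq0 e1.
have e2' : y = p2 by apply/eqP; rewrite -subr_eq0 e2.
have e3' : y' = q2 by apply: (@addrI _ x); rewrite -ev' ev e1'.
have e4 : x' - q1 = 0 by apply: H2; rewrite -(subrr y') {2}e3'; exact: HBsub.
have e4' : x' = q1 by apply/eqP; rewrite -subr_eq0 e4.
by rewrite e1' e2' e3' e4'.
Qed.

Definition Um (m11 m12 m21 m22 : F) v :=
  m11 *: (dec v).1.1 + m12 *: (dec v).2.1 + m21 *: (dec v).1.2 + m22 *: (dec v).2.2.

Lemma dec_lin k u v : dec (k *: u + v) =
  ((k *: (dec u).1.1 + (dec v).1.1, k *: (dec u).1.2 + (dec v).1.2),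
   (k *: (dec u).2.1 + (dec v).2.1, k *: (dec u).2.2 + (dec v).2.2)).
Proof.
case: (decP u) => hu1 hu2 eu; case: (decP v) => hv1 hv2 ev.
apply: decE; try (apply: HD => //; apply: HZ => //).
by rewrite {1}eu {1}ev scalerDr addrACA.
Qed.

Lemma linE11 : linear (fun v => (dec v).1.1). Proof. by move=> k u v; rewrite dec_lin. Qed.
Lemma linE12 : linear (fun v => (dec v).2.1). Proof. by move=> k u v; rewrite dec_lin. Qed.
Lemma linE21 : linear (fun v => (dec v).1.2). Proof. by move=> k u v; rewrite dec_lin. Qed.
Lemma linE22 : linear (fun v => (dec v).2.2). Proof. by move=> k u v; rewrite dec_lin. Qed.

Lemma Um_lin m11 m12 m21 m22 : linear (Um m11 m12 m21 m22).
Proof.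
apply: linear_add; last exact: linear_scale linE22.
apply: linear_add; last exact: linear_scale linE21.
apply: linear_add; [exact: linear_scale linE11 | exact: linear_scale linE12].
Qed.

Lemma Um_quad m11 m12 m21 m22 t d : t = m11 + m22 -> d = m11 * m22 - m12 * m21 ->
  forall v, Um m11 m12 m21 m22 (Um m11 m12 m21 m22 v) - t *: Um m11 m12 m21 m22 v
            + d *: v = 0.
Proof.
move=> -> -> v.
case: (decP v) => h1 h2 ev.
have Hdec : dec (Um m11 m12 m21 m22 v) =
  ((m11 *: (dec v).1.1 + m12 *: (dec v).2.1, m11 *: (dec v).1.2 + m12 *: (dec v).2.2),
   (m21 *: (dec v).1.1 + m22 *: (dec v).2.1, m21 *: (dec v).1.2 + m22 *: (dec v).2.2)).
  apply: decE; try (apply: HD; apply: HZ => //).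
  by rewrite /Um !addrA.
rewrite {1}/Um Hdec /=.
have := quad_id (dec v).1.1 (dec v).2.1 (dec v).1.2 (dec v).2.2 m11 m12 m21 m22.
by rewrite -ev.
Qed.

Lemma suff_full (l a1 b1 a2 b2 a3 b3 : F) :
  2%:R * l = (a1 + b1) + (a2 + b2) + (a3 + b3) ->
  exists u1 u2 u3 : V -> V, [/\ linear u1, linear u2 & linear u3] /\
   [/\ (forall v, u1 (u1 v) - (a1 + b1) *: u1 v + (a1 * b1) *: v = 0),
       (forall v, u2 (u2 v) - (a2 + b2) *: u2 v + (a2 * b2) *: v = 0),
       (forall v, u3 (u3 v) - (a3 + b3) *: u3 v + (a3 * b3) *: v = 0) &
       (forall v, l *: v = u1 v + u2 v + u3 v)].
Proof.
move=> hl.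
pose y0 := (a1 + b2) * (b1 + a2) - (l - a3) * (l - b3).
exists (Um a1 1 0 b1), (Um b2 0 y0 a2), (Um (l - a1 - b2) (-1) (- y0) (l - b1 - a2)).
split; first by split; apply: Um_lin.
have ha3 : a3 = 2%:R * l - (a1 + b1) - (a2 + b2) - b3 by rewrite hl; ring.
split.
- apply: Um_quad; ring.
- apply: Um_quad; ring.
- apply: Um_quad; rewrite /y0 ha3; ring.
- move=> v; case: (decP v) => _ _ ev.
  rewrite {1}ev /Um; apply: sum_id; ring.
Qed.
End Full.

Section Lin.
Variables (F : fieldType) (V : lmodType F).

Definition lin (n : nat) (a : nat -> F) (f : nat -> V) : V := \sum_(i < n) a i *: f i.
Definition padf (n : nat) (a : nat -> F) (i : nat) : F := if (i < n)%N then a i else 0.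

Lemma lin_pad n N a f : (n <= N)%N -> lin n a f = lin N (padf n a) f.
Proof.
move=> nN; rewrite /lin (big_ord_widen _ (fun i => a i *: f i) nN) big_mkcond /=.
apply: eq_bigr => i _; rewrite /padf; case: ifP => //; by rewrite scale0r.
Qed.

Lemma linsD n m a b f : lin n a f + lin m b f =
  lin (n + m) (fun i => padf n a i + padf m b i) f.
Proof.
rewrite (lin_pad a f (leq_addr m n)) (lin_pad b f (leq_addl n m)) /lin -big_split /=.
by apply: eq_bigr => i _; rewrite scalerDl.
Qed.

Lemma linsZ k n a f : k *: lin n a f = lin n (fun i => k * a i) f.
Proof. by rewrite /lin scaler_sumr; apply: eq_bigr => i _; rewrite scalerA. Qed.

Lemma lins0 n a f : (forall i, (i < n)%N -> a i = 0) -> lin n a f = 0.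
Proof. by move=> h; rewrite /lin big1 // => i _; rewrite h // scale0r. Qed.

Lemma sum_pairs (g : nat -> V) n :
  \sum_(i < n.*2) g i = \sum_(i < n) (g i.*2 + g i.*2.+1).
Proof.
elim: n => [|n IH]; first by rewrite !big_ord0.
by rewrite doubleS !big_ord_recr /= IH addrA.
Qed.

Definition eo (a b : nat -> F) (j : nat) : F := if odd j then b j./2 else a j./2.

Lemma lin_eo n a b c :
  lin n a (fun i => c i.*2) + lin n b (fun i => c i.*2.+1) = lin n.*2 (eo a b) c.
Proof.
rewrite /lin (sum_pairs (fun j => eo a b j *: c j)) -big_split /=; apply: eq_bigr => i _.
by rewrite /eo odd_double doubleK /= odd_double /= uphalf_double.
Qed.

Lemma lin_split n a c : lin n a c =
  lin n (fun i => padf n a i.*2) (fun i => c i.*2) +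
  lin n (fun i => padf n a i.*2.+1) (fun i => c i.*2.+1).
Proof.
rewrite lin_eo (lin_pad a c (leq_addr n n)) addnn.
rewrite /lin; apply: eq_bigr => i _; congr (_ *: _).
rewrite /eo; case: (boolP (odd i)) => oi.
  by congr (padf n a _); rewrite -{1}(odd_double_half i) oi add1n.
by congr (padf n a _); rewrite -{1}(odd_double_half i) (negPf oi) add0n.
Qed.

Definition indep (c : nat -> V) := forall n b, lin n b c = 0 -> forall i, (i < n)%N -> b i = 0.

Definition spanc (c : nat -> V) (e : V) := exists n b, e = lin n b c.

Lemma spanc0 c : spanc c 0.
Proof. by exists 0%N, (fun=> 0); rewrite /lin big_ord0. Qed.
Lemma spancD c e e' : spanc c e -> spanc c e' -> spanc c (e + e').
Proof. by move=> [n [a ->]] [m [b ->]]; rewrite linsD; eexists; eexists. Qed.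
Lemma spancZ c k e : spanc c e -> spanc c (k *: e).
Proof. by move=> [n [a ->]]; rewrite linsZ; eexists; eexists. Qed.
Lemma spancN c e : spanc c e -> spanc c (- e).
Proof. by rewrite -scaleN1r; apply: spancZ. Qed.

Lemma eo_zero c n m a b : indep c ->
  lin n a (fun i => c i.*2) + lin m b (fun i => c i.*2.+1) = 0 ->
  (forall i, (i < n)%N -> a i = 0) /\ (forall i, (i < m)%N -> b i = 0).
Proof.
move=> ic.
rewrite (lin_pad a _ (leq_addr m n)) (lin_pad b _ (leq_addl n m)) lin_eo => /ic h.
split=> i lt.
  have := h i.*2; rewrite /eo odd_double doubleK /padf lt => -> //.
  by rewrite ltn_double ltn_addr.
have := h i.*2.+1; rewrite /eo /= odd_double /= uphalf_double /padf lt => -> //.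
by rewrite ltn_Sdouble ltn_addl.
Qed.

Lemma eo_span c n m a b :
  spanc c (lin n a (fun i => c i.*2) + lin m b (fun i => c i.*2.+1)).
Proof.
rewrite (lin_pad a _ (leq_addr m n)) (lin_pad b _ (leq_addl n m)) lin_eo.
by eexists; eexists.
Qed.

End Lin.

Section Seq.
Variables (F : fieldType) (V : lmodType F).
Hypothesis Hinf : infinite_dim V.

Lemma inf_next (s : seq V) : exists v : V,
  forall c : 'I_(size s) -> F, v <> \sum_(i < size s) c i *: s`_i.
Proof.
apply: contrapT => Hne; apply: Hinf; exists s => v.
apply: contrapT => Hc; apply: Hne; exists v => c Hv; apply: Hc; exists c; exact: Hv.
Qed.

Definition next (s : seq V) : V := proj1_sig (cid (inf_next s)).
Lemma nextP s (c : 'I_(size s) -> F) : next s <> \sum_(i < size s) c i *: s`_i.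
Proof. exact: (proj2_sig (cid (inf_next s))). Qed.

Definition Sq n := iter n (fun s => rcons s (next s)) [::].
Definition cs (i : nat) : V := nth 0 (Sq i.+1) i.

Lemma size_Sq n : size (Sq n) = n.
Proof. by elim: n => //= n IH; rewrite size_rcons IH. Qed.

Lemma Sq_nth n i : (i < n)%N -> nth 0 (Sq n) i = cs i.
Proof.
elim: n => // n IH; rewrite ltnS leq_eqVlt => /orP [/eqP ->|lt] //.
by rewrite /= nth_rcons size_Sq lt IH.
Qed.

Lemma cs_next n : cs n = next (Sq n).
Proof. by rewrite /cs /= nth_rcons size_Sq ltnn eqxx. Qed.

Lemma cs_indep : indep cs.
Proof.
move=> n; elim: n => [|n IH] b; first by [].
rewrite /lin big_ord_recr /= => h.
have bn : b n = 0.
  apply: contrapT => /eqP bn0.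
  apply: (@nextP (Sq n) (fun i => - b i / b n)).
  rewrite -cs_next.
  have -> : \sum_(i < size (Sq n)) (- b i / b n) *: (Sq n)`_i =
            \sum_(i < n) (- b i / b n) *: cs i.
    rewrite -(big_mkord xpredT (fun i => (- b i / b n) *: (Sq n)`_i)) size_Sq.
    rewrite -(big_mkord xpredT (fun i => (- b i / b n) *: cs i)).
    by apply: eq_big_nat => i /andP [_ lt]; rewrite Sq_nth.
  apply: (scalerI bn0); rewrite scaler_sumr.
  have -> : \sum_(i < n) b n *: ((- b i / b n) *: cs i) = - \sum_(i < n) b i *: cs i.
    rewrite -sumrN; apply: eq_bigr => i _; rewrite scalerA -scaleNr; congr (_ *: _).
    by field.
  by apply/eqP; rewrite -addr_eq0 addrC h.
move: h; rewrite bn scale0r addr0 => /IH h i; rewrite ltnS leq_eqVlt => /orP [/eqP ->|] //.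
exact: h.
Qed.

End Seq.

Section Build.
Variables (F : fieldType) (V : lmodType F).

Definition valid (E : V -> Prop) (G : V * V -> Prop) :=
 [/\ (forall x y x' y', G (x, y) -> G (x', y') -> G (x + x', y + y')),
     (forall k x y, G (x, y) -> G (k *: x, k *: y)),
     (forall y, G (0, y) -> y = 0),
     (forall x, G (x, 0) -> x = 0) &
     (forall x y x' y' e, G (x, y) -> G (x', y') -> E e -> x + y' + e = 0 ->
        x = 0 /\ e = 0)].

Variables (K : V * V -> Prop) (c : nat -> V).
Hypotheses (vK : valid (spanc c) K) (K0 : K (0, 0)) (ic : indep c).
Hypothesis Kfull : forall v, exists x y x' y' e,
  [/\ K (x, y), K (x', y'), spanc c e & v = x + y' + e].

Let ce := fun i => c i.*2.
Let co := fun i => c i.*2.+1.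

Definition HH (x y : V) := exists x0 y0 n a,
  [/\ K (x0, y0), x = x0 + lin n a ce & y = y0 + lin n a co].

Lemma span_ce n a : spanc c (lin n a ce).
Proof.
have := eo_span c n 0 a (fun=> 0); rewrite {2}/lin big_ord0 addr0; exact.
Qed.
Lemma span_co n a : spanc c (lin n a co).
Proof.
have := eo_span c 0 n (fun=> 0) a; rewrite {1}/lin big_ord0 add0r; exact.
Qed.
Lemma ce_zero n a : lin n a ce = 0 -> forall i, (i < n)%N -> a i = 0.
Proof.
move=> h; have := @eo_zero _ _ c n 0 a (fun=> 0) ic.
by rewrite {2}/lin big_ord0 addr0 h => /(_ erefl) [].
Qed.
Lemma co_zero n a : lin n a co = 0 -> forall i, (i < n)%N -> a i = 0.
Proof.
move=> h; have := @eo_zero _ _ c 0 n (fun=> 0) a ic.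
by rewrite {1}/lin big_ord0 add0r h => /(_ erefl) [].
Qed.

Lemma HH_D x y x' y' : HH x y -> HH x' y' -> HH (x + x') (y + y').
Proof.
case: vK => vD _ _ _ _.
move=> [x0 [y0 [n [a [k1 -> ->]]]]] [x1 [y1 [m [b [k2 -> ->]]]]].
exists (x0 + x1), (y0 + y1), (n + m)%N, (fun i => padf n a i + padf m b i); split.
- exact: vD.
- by rewrite -linsD addrACA.
- by rewrite -linsD addrACA.
Qed.

Lemma HH_Z k x y : HH x y -> HH (k *: x) (k *: y).
Proof.
case: vK => _ vZ _ _ _.
move=> [x0 [y0 [n [a [k1 -> ->]]]]].
exists (k *: x0), (k *: y0), n, (fun i => k * a i); split.
- exact: vZ.
- by rewrite scalerDr linsZ.
- by rewrite scalerDr linsZ.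
Qed.

Lemma HH_1 y : HH 0 y -> y = 0.
Proof.
case: vK => _ _ v1 _ vdir.
move=> [x0 [y0 [n [a [k1 e1 ->]]]]].
have [x00 e0] : x0 = 0 /\ lin n a ce = 0.
  by apply: (vdir _ _ _ _ _ k1 K0 (span_ce n a)); rewrite addr0 -e1.
rewrite (lins0 co (ce_zero e0)) addr0; apply: v1; by rewrite -x00.
Qed.

Lemma HH_2 x : HH x 0 -> x = 0.
Proof.
case: vK => _ _ _ v2 vdir.
move=> [x0 [y0 [n [a [k1 -> e1]]]]].
have [_ e0] : (0 : V) = 0 /\ lin n a co = 0.
  by apply: (vdir _ _ _ _ _ K0 k1 (span_co n a)); rewrite add0r -e1.
have y00 : y0 = 0 by rewrite e1 e0 addr0.
rewrite (lins0 ce (co_zero e0)) addr0; apply: v2; by rewrite -y00.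
Qed.

Lemma HH_dir x y x' y' : HH x y -> HH x' y' -> x + y' = 0 -> x = 0.
Proof.
case: vK => _ _ _ _ vdir.
move=> [x0 [y0 [n [a [k1 -> _]]]]] [x1 [y1 [m [b [k2 _ ->]]]]] h.
have h' : x0 + y1 + (lin n a ce + lin m b co) = 0 by rewrite -addrACA.
have [x00 e0] := vdir _ _ _ _ _ k1 k2 (eo_span c n m a b) h'.
have [a0 _] := eo_zero ic e0.
by rewrite x00 add0r; exact: lins0 ce a0.
Qed.

Lemma HH_full v : exists t : (V * V) * (V * V),
  [/\ HH t.1.1 t.1.2, HH t.2.1 t.2.2 & v = t.1.1 + t.2.2].
Proof.
have [x [y [x' [y' [e [k1 k2 [n [b ->]] ->]]]]]] := Kfull v.
rewrite lin_split.
set b1 := fun i => padf n b i.*2.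
set b2 := fun i => padf n b i.*2.+1.
exists ((x + lin n b1 ce, y + lin n b1 co), (x' + lin n b2 ce, y' + lin n b2 co)); split.
- by exists x, y, n, b1.
- by exists x', y', n, b2.
- by rewrite /= addrACA.
Qed.
End Build.

Section Ev5.
Variables (F : fieldType) (V : lmodType F) (x1 x2 x3 x4 x5 : V).
Definition ev5 r1 r2 r3 r4 r5 := r1 *: x1 + r2 *: x2 + r3 *: x3 + r4 *: x4 + r5 *: x5.
Lemma ev5D r1 r2 r3 r4 r5 s1 s2 s3 s4 s5 :
  ev5 r1 r2 r3 r4 r5 + ev5 s1 s2 s3 s4 s5 =
  ev5 (r1 + s1) (r2 + s2) (r3 + s3) (r4 + s4) (r5 + s5).
Proof.
by rewrite /ev5 !scalerDl addrACA [X in X + _]addrACA [X in X + _ + _]addrACA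
  [X in X + _ + _ + _]addrACA.
Qed.
Lemma ev5Z k r1 r2 r3 r4 r5 :
  k *: ev5 r1 r2 r3 r4 r5 = ev5 (k * r1) (k * r2) (k * r3) (k * r4) (k * r5).
Proof. by rewrite /ev5 !scalerDr !scalerA. Qed.
Lemma ev5N r1 r2 r3 r4 r5 : - ev5 r1 r2 r3 r4 r5 = ev5 (- r1) (- r2) (- r3) (- r4) (- r5).
Proof. by rewrite -scaleN1r ev5Z !mulN1r. Qed.
Lemma g1 : x1 = ev5 1 0 0 0 0. Proof. by rewrite /ev5 !scale0r !addr0 scale1r. Qed.
Lemma g2 : x2 = ev5 0 1 0 0 0. Proof. by rewrite /ev5 !scale0r !addr0 add0r scale1r. Qed.
Lemma g3 : x3 = ev5 0 0 1 0 0. Proof. by rewrite /ev5 !scale0r !addr0 !add0r scale1r. Qed.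
Lemma g4 : x4 = ev5 0 0 0 1 0. Proof. by rewrite /ev5 !scale0r addr0 !add0r scale1r. Qed.
Lemma g5 : x5 = ev5 0 0 0 0 1. Proof. by rewrite /ev5 !scale0r !add0r scale1r. Qed.
Lemma ev50 : ev5 0 0 0 0 0 = 0. Proof. by rewrite /ev5 !scale0r !addr0. Qed.

Ltac norm5 := rewrite ?[x1]g1 ?[x2]g2 ?[x3]g3 ?[x4]g4 ?[x5]g5;
  repeat (first [rewrite ev5Z | rewrite ev5N | rewrite ev5D]).

Lemma solve_v r s : x1 + r *: x4 + (x2 + s *: x5) + x3 = 0 -> r != 0 ->
  x4 = (- r^-1) *: x1 + (- r^-1) *: x2 + ((- r^-1) *: x3 + (- (r^-1 * s)) *: x5).
Proof.
move=> h r0; apply/eqP; rewrite -subr_eq0 -(scaler0 _ (r^-1)) -{}h.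
apply/eqP; norm5; congr ev5; field; exact: r0.
Qed.
End Ev5.

Lemma solve_z (F : fieldType) (V : lmodType F) (x1 x2 x3 x5 : V) s :
  x1 + (x2 + s *: x5) + x3 = 0 -> s != 0 ->
  x5 = (- s^-1) *: x1 + (- s^-1) *: x2 + (- s^-1) *: x3.
Proof.
move=> h s0; have := @solve_v F V x1 x2 x3 x5 0 s 0.
rewrite !scaler0 !addr0 => -> //.
by rewrite -h; congr (_ + _); rewrite addrAC -addrA.
Qed.

Section Z.
Variables (F : fieldType) (V : lmodType F) (c : nat -> V).
Hypothesis ic : indep c.

Lemma chain_valid (Fm : set (set (V * V))) :
  (Fm `<=` valid (spanc c))%classic -> total_on Fm subset ->
  valid (spanc c) (\bigcup_(X in Fm) X)%classic.
Proof.
move=> FP tot; split.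
- move=> x y x' y' [A FA Ax] [B FB Bx].
  have [AB|BA] := tot A B FA FB.
  + exists B => //; case: (FP B FB) => vD _ _ _ _; exact: vD (AB _ Ax) Bx.
  + exists A => //; case: (FP A FA) => vD _ _ _ _; exact: vD Ax (BA _ Bx).
- move=> k x y [A FA Ax]; exists A => //; case: (FP A FA) => _ vZ _ _ _; exact: vZ.
- move=> y [A FA Ax]; case: (FP A FA) => _ _ v1 _ _; exact: v1.
- move=> x [A FA Ax]; case: (FP A FA) => _ _ _ v2 _; exact: v2.
- move=> x y x' y' e [A FA Ax] [B FB Bx] Ee h; have [AB|BA] := tot A B FA FB.
  + case: (FP B FB) => _ _ _ _ vd; exact: vd _ _ _ _ _ (AB _ Ax) Bx Ee h.
  + case: (FP A FA) => _ _ _ _ vd; exact: vd _ _ _ _ _ Ax (BA _ Bx) Ee h.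
Qed.

Definition indep2 (G : V * V -> Prop) p q := forall r s x y x' y' e,
  G (x, y) -> G (x', y') -> spanc c e -> x + r *: p + (y' + s *: q) + e = 0 ->
  r = 0 /\ s = 0.

Definition ext (G : V * V -> Prop) p q : V * V -> Prop :=
  fun pr => exists r x0 y0, G (x0, y0) /\ pr = (x0 + r *: p, y0 + r *: q).

Lemma ext_valid G p q : valid (spanc c) G -> G (0, 0) -> indep2 G p q ->
  valid (spanc c) (ext G p q).
Proof.
move=> [vD vZ v1 v2 vd] G0 ip; split.
- move=> x y x' y' [r [x0 [y0 [g [= -> ->]]]]] [r' [x1 [y1 [g' [= -> ->]]]]].
  exists (r + r'), (x0 + x1), (y0 + y1); split; first exact: vD.
  by rewrite !scalerDl; congr (_, _); rewrite addrACA.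
- move=> k x y [r [x0 [y0 [g [= -> ->]]]]]; exists (k * r), (k *: x0), (k *: y0).
  by split; [exact: vZ | rewrite !scalerDr !scalerA].
- move=> y [r [x0 [y0 [g [= e1 ->]]]]].
  have [r0 _] : r = 0 /\ (0 : F) = 0.
    apply: (ip r 0 x0 y0 0 0 0 g G0 (spanc0 c)).
    by rewrite scale0r !addr0 -e1.
  move: e1; rewrite r0 scale0r addr0 => x00; rewrite -x00 in g.
  by rewrite (v1 _ g) scale0r addr0.
- move=> x [r [x0 [y0 [g [= -> e1]]]]].
  have [_ r0] : (0 : F) = 0 /\ r = 0.
    apply: (ip 0 r 0 0 x0 y0 0 G0 g (spanc0 c)).
    by rewrite scale0r !addr0 add0r -e1.
  move: e1; rewrite r0 scale0r addr0 => y00; rewrite -y00 in g.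
  by rewrite (v2 _ g) scale0r addr0.
- move=> x y x' y' e [r [x0 [y0 [g [= -> _]]]]] [r' [x1 [y1 [g' [= _ ->]]]]] Ee h.
  have [r0 r'0] := ip r r' x0 y0 x1 y1 e g g' Ee h.
  rewrite r0 r'0 !scale0r !addr0 in h *.
  exact: vd _ _ _ _ _ g g' Ee h.
Qed.

Lemma zorn_max : exists A, [/\ valid (spanc c) A, A (0, 0) & forall p q, ~ indep2 A p q].
Proof.
have [A [vA maxA]] := Zorn_bigcup chain_valid.
have A0 : A (0, 0).
  apply: contrapT => nA.
  have [[x y] Axy] : exists t, A t.
    apply: contrapT => nx; apply: (maxA (fun pr => pr = (0, 0))).
    - split; first by move=> t At; exfalso; apply: nx; exists t.
      by move=> ZA; apply: nA; exact: ZA (0, 0) erefl.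
    - split.
      + by move=> x y x' y' [= -> ->] [= -> ->]; rewrite addr0.
      + by move=> k x y [= -> ->]; rewrite scaler0.
      + by move=> y [= ->].
      + by move=> x [= ->].
      + by move=> x y x' y' e [= -> _] [= _ ->] _; rewrite !add0r => ->.
  case: vA => _ vZ _ _ _; have := vZ 0 x y Axy; rewrite !scale0r; exact: nA.
exists A; split => // p q ip.
apply: (maxA (ext A p q)); last exact: ext_valid vA A0 ip.
split.
- move=> [x y] Axy; exists 0, x, y; split => //; by rewrite !scale0r !addr0.
- move=> extA.
  have Apq : A (p, q).
    by apply: extA; exists 1, 0, 0; split => //; rewrite !scale1r !add0r.
  case: vA => _ vZ _ _ _; have Amp := vZ (-1) p q Apq.
  have [h _] := ip 1 0 (-1 *: p) (-1 *: q) 0 0 0 Amp A0 (spanc0 c)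
    ltac:(by rewrite scaleN1r scale1r addNr scale0r !addr0).
  by move/eqP: h; rewrite oner_eq0.
Qed.

Definition NotSE (G : V * V -> Prop) z := forall s x y x' y' e,
  G (x, y) -> G (x', y') -> spanc c e -> x + (y' + s *: z) + e = 0 -> s = 0.

Definition cz (z : V) (i : nat) : V := if i is j.+1 then c j else z.

Lemma lin_cz z n b : lin n.+1 b (cz z) = b 0%N *: z + lin n (fun i => b i.+1) c.
Proof.
by rewrite /lin big_ord_recl /=.
Qed.

Lemma spanc_shift z e' : spanc (cz z) e' -> exists k e, spanc c e /\ e' = k *: z + e.
Proof.
move=> [[|n] [b ->]].
  by exists 0, 0; split; [exact: spanc0 | rewrite /lin big_ord0 scale0r addr0].
by exists (b 0%N), (lin n (fun i => b i.+1) c); split; [eexists; eexists | rewrite lin_cz].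
Qed.

Lemma spanc_shift' z k e : spanc c e -> spanc (cz z) (k *: z + e).
Proof.
move=> [n [b ->]]; exists n.+1, (fun i => if i is j.+1 then b j else k).
by rewrite lin_cz.
Qed.

Lemma exists_full : exists (K : V * V -> Prop) (c' : nat -> V),
  [/\ valid (spanc c') K, K (0, 0), indep c' &
      forall v, exists x y x' y' e,
        [/\ K (x, y), K (x', y'), spanc c' e & v = x + y' + e]].
Proof.
have [A [vA A0 noext]] := zorn_max.
have vZ : forall k x y, A (x, y) -> A (k *: x, k *: y) by case: vA.
have [[z nz]|allSE] := pselect (exists z, NotSE A z).
- exists A, (cz z); split => //.
  + case: vA => vD _ v1 v2 vd; split => //.
    move=> x y x' y' e' g g' /spanc_shift [k [e [Ee ->]]] h.
    have k0 : k = 0.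
      by apply: (nz k x y x' y' e g g' Ee); rewrite -h !addrA.
    rewrite k0 scale0r add0r in h *; exact: vd _ _ _ _ _ g g' Ee h.
  + move=> [|n] b; first by move=> _ i.
    rewrite lin_cz => h.
    have b0 : b 0%N = 0.
      apply: (nz (b 0%N) 0 0 0 0 (lin n (fun i => b i.+1) c) A0 A0); first by eexists; eexists.
      by rewrite !add0r.
    move: h; rewrite b0 scale0r add0r => /ic h' [|i] //; exact: h'.
  + move=> v; apply: contrapT => nfull; apply: (noext v z) => r s x y x' y' e g g' Ee h.
    have [r0|r0] := eqVneq r 0.
      split => //; apply: (nz s x y x' y' e g g' Ee).
      by move: h; rewrite r0 scale0r addr0.
    exfalso; apply: nfull.
    exists ((- r^-1) *: x), ((- r^-1) *: y), ((- r^-1) *: x'), ((- r^-1) *: y'),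
      ((- (r^-1 * s)) *: z + (- r^-1) *: e); split; try exact: vZ.
    * by apply: spanc_shift'; apply: spancZ.
    * by rewrite (solve_v h r0) [_ *: e + _]addrC.
- exists A, c; split => //.
  move=> v; apply: contrapT => nfull; apply: allSE; exists v.
  move=> s x y x' y' e g g' Ee h; apply: contrapT => /eqP s0; apply: nfull.
  exists ((- s^-1) *: x), ((- s^-1) *: y), ((- s^-1) *: x'), ((- s^-1) *: y'),
      ((- s^-1) *: e); split; try exact: vZ.
  * by apply: spancZ.
  * exact: solve_z h s0.
Qed.
End Z.

Lemma scal_annih (F : fieldType) (V : lmodType F) (a b x : F) (v : V) :
  (x == a) || (x == b) -> x *: (x *: v) - (a + b) *: (x *: v) + (a * b) *: v = 0.
Proof.
move=> /orP [] /eqP ->; rewrite !scalerA -scalerBl -scalerDl.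
  by rewrite (_ : a * a - (a + b) * a + a * b = 0) ?scale0r //; ring.
by rewrite (_ : b * b - (a + b) * b + a * b = 0) ?scale0r //; ring.
Qed.

Lemma scal_linear (F : fieldType) (V : lmodType F) (x : F) : linear (fun v : V => x *: v).
Proof. by move=> k u v; rewrite scalerDr !scalerA mulrC. Qed.

Theorem proposition1 (F : fieldType) (V : lmodType F) (l : F)
  (p1 p2 p3 : {poly F}) :
  infinite_dim V ->
  split_poly p1 -> split_poly p2 -> split_poly p3 ->
  size p1 = 3%N -> size p2 = 3%N -> size p3 = 3%N ->
  (endo_sum3 p1 p2 p3 (fun v : V => l *: v) <->
   (scalar_sum3 p1 p2 p3 l \/
    2%:R * l = poly_tr p1 + poly_tr p2 + poly_tr p3)).
Proof.
move=> Hinf sp1 sp2 sp3 s1 s2 s3.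
have [c1 [a1 [b1 [c10 ->]]]] := split3 sp1 s1.
have [c2 [a2 [b2 [c20 ->]]]] := split3 sp2 s2.
have [c3 [a3 [b3 [c30 ->]]]] := split3 sp3 s3.
rewrite !q2_tr //.
have SSok : SS l a1 b1 a2 b2 a3 b3 -> scalar_sum3 (q2 c1 a1 b1) (q2 c2 a2 b2) (q2 c3 a3 b3) l.
  move=> [x1 [x2 [x3 [r1 r2 r3 ->]]]]; exists x1, x2, x3.
  by rewrite !q2_root.
split.
- move=> [u1 [u2 [u3 [[L1 L2 L3] [[A1 A2 A3] Hs]]]]].
  have Q1 : forall v, u1 (u1 v) - (a1 + b1) *: u1 v + (a1 * b1) *: v = 0.
    by move=> v; have := A1 v; rewrite poly_endo_q2 => /eqP; rewrite scaler_eq0 (negPf c10) /= => /eqP.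
  have Q2 : forall v, u2 (u2 v) - (a2 + b2) *: u2 v + (a2 * b2) *: v = 0.
    by move=> v; have := A2 v; rewrite poly_endo_q2 => /eqP; rewrite scaler_eq0 (negPf c20) /= => /eqP.
  have Q3 : forall v, u3 (u3 v) - (a3 + b3) *: u3 v + (a3 * b3) *: v = 0.
    by move=> v; have := A3 v; rewrite poly_endo_q2 => /eqP; rewrite scaler_eq0 (negPf c30) /= => /eqP.
  have Hs' : forall v, l *: v = u1 v + u2 v + u3 v by exact: Hs.
  have [w0 w00] : exists w : V, w != 0.
    apply: contrapT => h; apply: Hinf; exists [::] => v; exists (fun _ => 0).
    rewrite big_ord0; apply: contrapT => nv; apply: h; exists v; apply/eqP; exact: nv.
  have [w [a [a' [ww0 Haw Haa Haa']]]] : exists w a a',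
      [/\ w != 0, u1 w = a *: w, a + a' = a1 + b1 & a * a' = a1 * b1].
    case: (eqVneq (u1 w0) (a1 *: w0)) => h.
      by exists w0, a1, b1; split.
    exists (u1 w0 - a1 *: w0), b1, a1; split.
    + by rewrite subr_eq0.
    + rewrite (linB L1) (linZ L1) (solve1 (Q1 w0)).
      rewrite scalerDl addrAC [a1 *: _ + _]addrC addrK scalerBr scalerA mulrC //.
    + by rewrite addrC.
    + by rewrite mulrC.
  have [[y Hy]|Hn] := pselect (exists y, u2 w = y *: w).
    by left; apply: SSok; exact: (common L1 L2 L3 Q1 Q2 Q3 Hs' ww0 Haw Hy).
  have [|] := nec_main L1 L2 L3 Q1 Q2 Q3 Hs' ww0 Haw (erefl _) (erefl _) Haa Haa' Hn.
    by move/SSok; left.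
  by right.
- move=> [[x1 [x2 [x3 [r1 r2 r3 ->]]]]|hl].
    exists (fun v => x1 *: v), (fun v => x2 *: v), (fun v => x3 *: v).
    split; first by split; apply: scal_linear.
    split; last by move=> v; rewrite /= !scalerDl.
    split => v; rewrite poly_endo_q2 scal_annih ?scaler0 //.
    + by rewrite -(q2_root a1 b1 x1 c10).
    + by rewrite -(q2_root a2 b2 x2 c20).
    + by rewrite -(q2_root a3 b3 x3 c30).
  have [K [c' [vK K0 ic' Kfull]]] := exists_full (@cs_indep _ _ Hinf).
  have [u1 [u2 [u3 [[L1 L2 L3] [Q1 Q2 Q3 S]]]]] :=
    suff_full (HH_D vK) (HH_Z vK) (HH_1 vK K0 ic') (HH_2 vK K0 ic') (HH_dir vK ic')
      (HH_full Kfull) hl.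
  exists u1, u2, u3; split; first by split.
  split; last exact: S.
  by split => v; rewrite poly_endo_q2 ?Q1 ?Q2 ?Q3 scaler0.
Qed.
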